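(* For any nonzero positively oriented m-triangle $\delta$, the polar distance $r$ of its shape from the north pole (the spherical distance in the shape sphere $M^\ast\simeq S^2(1/2)$) satisfies $$\cos(2r)=4\sqrt{m_1m_2m_3}\,\frac{\Delta}{I},$$ where $\Delta$ and $I$ are the area and moment of inertia of $\delta$.
   Context: Masses $m_1,m_2,m_3>0$, $m_1+m_2+m_3=1$; m-triangle $(\mathbf a_1,\mathbf a_2,\mathbf a_3)$, $\sum m_i\mathbf a_i=0$, $I=\sum m_i|\mathbf a_i|^2$. The shape sphere $M^\ast$ is the space of oriented m-triangles with $I=1$ modulo rotation, with the kinematic metric (induced by $\sum m_i|d\mathbf a_i|^2$ through zero angular momentum lifts), isometric to a round sphere of radius $1/2$; its north pole is the shape of the positively oriented m-triangle with $m_j|\mathbf a_j|^2=(1-m_j)/2$, and the equator (at distance $\pi/4$ from it) consists of collinear shapes. *)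

(* Defs.v *)
From mathcomp Require Import all_boot all_order all_algebra.
From mathcomp Require Import all_classical all_reals all_analysis.
Set Implicit Arguments. Unset Strict Implicit. Unset Printing Implicit Defensive.
Import Order.TTheory GRing.Theory Num.Theory.
Local Open Scope classical_set_scope.
Local Open Scope ring_scope.

Section ThreeBody.
Variable R : realType.

Definition i0 : 'I_3 := @Ordinal 3 0 isT.
Definition i1 : 'I_3 := @Ordinal 3 1 isT.
Definition i2 : 'I_3 := @Ordinal 3 2 isT.

Definition config := 'I_3 -> R * R.

Definition masses (m : 'I_3 -> R) := (forall i, 0 < m i) /\ \sum_i m i = 1.

Definition mtriangle (m : 'I_3 -> R) (a : config) :=
  \sum_i m i * (a i).1 = 0 /\ \sum_i m i * (a i).2 = 0.

Definition inertia (m : 'I_3 -> R) (a : config) : R :=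
  \sum_i m i * ((a i).1 ^+ 2 + (a i).2 ^+ 2).

Definition kin (m : 'I_3 -> R) (a b : config) : R :=
  \sum_i m i * ((a i).1 * (b i).1 + (a i).2 * (b i).2).

(* signed area (positive iff a_1 a_2 a_3 is counterclockwise) *)
Definition area (a : config) : R :=
  (((a i1).1 - (a i0).1) * ((a i2).2 - (a i0).2)
   - ((a i2).1 - (a i0).1) * ((a i1).2 - (a i0).2)) / 2.

Definition rotp (t : R) (p : R * R) : R * R :=
  (cos t * p.1 - sin t * p.2, sin t * p.1 + cos t * p.2).

Definition rotc (t : R) (a : config) : config := fun i => rotp t (a i).

Definition scalec (c : R) (a : config) : config :=
  fun i => (c * (a i).1, c * (a i).2).

Definition normalize (m : 'I_3 -> R) (a : config) : config :=
  scalec (Num.sqrt (inertia m a))^-1 a.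

(* great-circle (intrinsic) distance on the unit sphere I = 1 of m-triangles
   for the kinematic metric *)
Definition sphere_dist (m : 'I_3 -> R) (x y : config) : R := acos (kin m x y).

(* distance in the shape sphere M* = (sphere I = 1)/SO(2) with the quotient
   (kinematic) metric: the distance between the rotation orbits *)
Definition shape_dist (m : 'I_3 -> R) (x y : config) : R :=
  inf [set sphere_dist m x (rotc t y) | t in [set: R]].

Definition north_pole_rep (m : 'I_3 -> R) (n : config) :=
  mtriangle m n /\
  (forall j, m j * ((n j).1 ^+ 2 + (n j).2 ^+ 2) = (1 - m j) / 2) /\
  0 < area n.

End ThreeBody.

(* Main.v *)
Require Import Defs.
From mathcomp Require Import all_boot all_order all_algebra.
From mathcomp Require Import all_classical all_reals all_analysis.
From mathcomp Require Import ring lra.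
Import Order.TTheory GRing.Theory Num.Theory.
Local Open Scope classical_set_scope.
Local Open Scope ring_scope.

Ltac fs := field; repeat (apply/andP; split); try assumption.

Lemma core (R : realType) (m1 m2 m3 x1 y1 x2 y2 x3 y3 X1 Y1 X2 Y2 X3 Y3
   p1 q1 p2 q2 g1 h1 g2 h2 : R) :
 0 < m1 -> 0 < m2 -> 0 < m3 -> m1 + m2 + m3 = 1 ->
 x1 = - (m2 * p1 + m3 * (m1 + m2) * p2) / (m1 + m2) ->
 y1 = - (m2 * q1 + m3 * (m1 + m2) * q2) / (m1 + m2) ->
 x2 = (m1 * p1 - m3 * (m1 + m2) * p2) / (m1 + m2) ->
 y2 = (m1 * q1 - m3 * (m1 + m2) * q2) / (m1 + m2) ->
 x3 = (m1 + m2) * p2 -> y3 = (m1 + m2) * q2 ->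
 X1 = - (m2 * g1 + m3 * (m1 + m2) * g2) / (m1 + m2) ->
 Y1 = - (m2 * h1 + m3 * (m1 + m2) * h2) / (m1 + m2) ->
 X2 = (m1 * g1 - m3 * (m1 + m2) * g2) / (m1 + m2) ->
 Y2 = (m1 * h1 - m3 * (m1 + m2) * h2) / (m1 + m2) ->
 X3 = (m1 + m2) * g2 -> Y3 = (m1 + m2) * h2 ->
 m1 * (x1 ^+ 2 + y1 ^+ 2) = (1 - m1) / 2 ->
 m2 * (x2 ^+ 2 + y2 ^+ 2) = (1 - m2) / 2 ->
 m3 * (x3 ^+ 2 + y3 ^+ 2) = (1 - m3) / 2 ->
 0 < ((x2 - x1) * (y3 - y1) - (x3 - x1) * (y2 - y1)) / 2 ->
 let P := m1 * (x1 * X1 + y1 * Y1) + m2 * (x2 * X2 + y2 * Y2) + m3 * (x3 * X3 + y3 * Y3) in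
 let Q := m1 * (y1 * X1 - x1 * Y1) + m2 * (y2 * X2 - x2 * Y2) + m3 * (y3 * X3 - x3 * Y3) in
 let Ia := m1 * (X1 ^+ 2 + Y1 ^+ 2) + m2 * (X2 ^+ 2 + Y2 ^+ 2) + m3 * (X3 ^+ 2 + Y3 ^+ 2) in
 let D := ((X2 - X1) * (Y3 - Y1) - (X3 - X1) * (Y2 - Y1)) / 2 in
 2 * (P ^+ 2 + Q ^+ 2) - Ia = 4 * Num.sqrt (m1 * m2 * m3) * D /\ P ^+ 2 + Q ^+ 2 <= Ia.
Proof.
move=> m1p m2p m3p hs -> -> -> -> -> -> -> -> -> -> -> -> hd1 hd2 hd3 har P Q Ia D.
have em3 : m3 = 1 - m1 - m2 by lra.
have Mpos : 0 < (m1 + m2) by lra.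
have Mnz : (m1 + m2) != 0 by rewrite gt_eqF.
have m10 : m1 != 0 by rewrite gt_eqF.
have m20 : m2 != 0 by rewrite gt_eqF.
have m30 : m3 != 0 by rewrite gt_eqF.
have m3' : 1 - m1 - m2 != 0 by rewrite -em3.
have hB : (m1 + m2) * m3 * (p2 ^+ 2 + q2 ^+ 2) = 1/2.
  apply: (mulfI Mnz).
  have -> : (m1 + m2) * ((m1 + m2) * m3 * (p2 ^+ 2 + q2 ^+ 2)) = m3 * (((m1 + m2) * p2) ^+ 2 + ((m1 + m2) * q2) ^+ 2) by ring.
  by rewrite hd3 em3; fs.
have e1 : m1 * ((- (m2 * p1 + m3 * (m1 + m2) * p2) / (m1 + m2)) ^+ 2 + (- (m2 * q1 + m3 * (m1 + m2) * q2) / (m1 + m2)) ^+ 2)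
   = (m1 * m3 / (m1 + m2)) * ((m1 + m2) * m3 * (p2 ^+ 2 + q2 ^+ 2)) + (m2 / (m1 + m2)) * (m1 * m2 / (m1 + m2) * (p1 ^+ 2 + q1 ^+ 2)) + 2 * (m1 * m2 * m3 / (m1 + m2)) * (p1 * p2 + q1 * q2).
  by fs.
have e2 : m2 * (((m1 * p1 - m3 * (m1 + m2) * p2) / (m1 + m2)) ^+ 2 + ((m1 * q1 - m3 * (m1 + m2) * q2) / (m1 + m2)) ^+ 2)
   = (m1 / (m1 + m2)) * (m1 * m2 / (m1 + m2) * (p1 ^+ 2 + q1 ^+ 2)) + (m2 * m3 / (m1 + m2)) * ((m1 + m2) * m3 * (p2 ^+ 2 + q2 ^+ 2)) - 2 * (m1 * m2 * m3 / (m1 + m2)) * (p1 * p2 + q1 * q2).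
  by fs.
rewrite e1 hB in hd1. rewrite e2 hB in hd2.
have hA : m1 * m2 / (m1 + m2) * (p1 ^+ 2 + q1 ^+ 2) = 1/2.
  have -> : m1 * m2 / (m1 + m2) * (p1 ^+ 2 + q1 ^+ 2) = (m1 * m3 / (m1 + m2) * (1/2) + m2 / (m1 + m2) * (m1 * m2 / (m1 + m2) * (p1 ^+ 2 + q1 ^+ 2)) + 2 * (m1 * m2 * m3 / (m1 + m2)) * (p1 * p2 + q1 * q2))
     + (m1 / (m1 + m2) * (m1 * m2 / (m1 + m2) * (p1 ^+ 2 + q1 ^+ 2)) + m2 * m3 / (m1 + m2) * (1/2) - 2 * (m1 * m2 * m3 / (m1 + m2)) * (p1 * p2 + q1 * q2)) - m3 * (1/2).
    by rewrite em3; fs.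
  by rewrite hd1 hd2 em3; fs.
rewrite hA in hd1.
have hR : p1 * p2 + q1 * q2 = 0.
  have : (p1 * p2 + q1 * q2) * (2 * (m1 * m2 * m3 / (m1 + m2))) = 0.
    have -> : (p1 * p2 + q1 * q2) * (2 * (m1 * m2 * m3 / (m1 + m2))) = (m1 * m3 / (m1 + m2) * (1/2) + m2 / (m1 + m2) * (1/2) + 2 * (m1 * m2 * m3 / (m1 + m2)) * (p1 * p2 + q1 * q2)) - m1 * m3 / (m1 + m2) * (1/2) - m2 / (m1 + m2) * (1/2) by ring.
    by rewrite hd1 em3; fs.
  move/eqP; rewrite mulf_eq0 => /orP[/eqP //|/eqP h].
  have : 0 < 2 * (m1 * m2 * m3 / (m1 + m2)).
    by apply: mulr_gt0 => //; apply: divr_gt0 => //; apply: mulr_gt0 => //; apply: mulr_gt0.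
  by rewrite h ltxx.
have hC : 0 < p1 * q2 - q1 * p2.
  have <- : ((m1 * p1 - m3 * (m1 + m2) * p2) / (m1 + m2) - - (m2 * p1 + m3 * (m1 + m2) * p2) / (m1 + m2)) * ((m1 + m2) * q2 - - (m2 * q1 + m3 * (m1 + m2) * q2) / (m1 + m2)) -
     ((m1 + m2) * p2 - - (m2 * p1 + m3 * (m1 + m2) * p2) / (m1 + m2)) * ((m1 * q1 - m3 * (m1 + m2) * q2) / (m1 + m2) - - (m2 * q1 + m3 * (m1 + m2) * q2) / (m1 + m2))
     = p1 * q2 - q1 * p2.
    by rewrite em3; fs.
  by move: har; rewrite pmulr_lgt0.
set s := Num.sqrt (m1 * m2 * m3).
have mp : 0 < m1 * m2 * m3 by apply: mulr_gt0 => //; apply: mulr_gt0.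
have hs2 : s ^+ 2 = m1 * m2 * m3 by rewrite /s sqr_sqrtr // ltW.
have spos : 0 < s by rewrite /s sqrtr_gt0.
have hE1 : p1 ^+ 2 + q1 ^+ 2 = (m1 + m2) / (2 * m1 * m2).
  have h0 : m1 * m2 / (m1 + m2) != 0 by rewrite gt_eqF // divr_gt0 // mulr_gt0.
  apply: (mulfI h0); rewrite hA; fs.
have hE2 : p2 ^+ 2 + q2 ^+ 2 = 1 / (2 * (m1 + m2) * m3).
  have h0 : (m1 + m2) * m3 != 0 by rewrite mulf_eq0 negb_or Mnz m30.
  apply: (mulfI h0); rewrite hB; by fs.
set l := s / ((m1 + m2) * m3).
have lpos : 0 < l by rewrite /l divr_gt0 // mulr_gt0.
have hCl : p1 * q2 - q1 * p2 = l * (p1 ^+ 2 + q1 ^+ 2).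
  apply/eqP; rewrite -(eqrXn2 (n:=2)) //; last 2 first.
  - exact: ltW.
  - by apply: mulr_ge0; [exact: ltW | apply: addr_ge0; exact: sqr_ge0].
  apply/eqP.
  have -> : (p1 * q2 - q1 * p2) ^+ 2 = (p1 ^+ 2 + q1 ^+ 2) * (p2 ^+ 2 + q2 ^+ 2) - (p1 * p2 + q1 * q2) ^+ 2 by ring.
  have -> : (l * (p1 ^+ 2 + q1 ^+ 2)) ^+ 2 = s ^+ 2 * (p1 ^+ 2 + q1 ^+ 2) ^+ 2 / ((m1 + m2) * m3) ^+ 2.
    by rewrite /l; fs.
  by rewrite hR hE1 hE2 hs2; fs.
have hsos : (p2 + l * q1) ^+ 2 + (q2 - l * p1) ^+ 2 = 0.
  have -> : (p2 + l * q1) ^+ 2 + (q2 - l * p1) ^+ 2 = (p2 ^+ 2 + q2 ^+ 2) + l ^+ 2 * (p1 ^+ 2 + q1 ^+ 2) - 2 * l * (p1 * q2 - q1 * p2) by ring.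
  rewrite hCl.
  have -> : (p2 ^+ 2 + q2 ^+ 2) + l ^+ 2 * (p1 ^+ 2 + q1 ^+ 2) - 2 * l * (l * (p1 ^+ 2 + q1 ^+ 2)) = (p2 ^+ 2 + q2 ^+ 2) - s ^+ 2 / ((m1 + m2) * m3) ^+ 2 * (p1 ^+ 2 + q1 ^+ 2).
    by rewrite /l; fs.
  by rewrite hs2 hE1 hE2; fs.
have hp2 : p2 = - (l * q1).
  have k1 := sqr_ge0 (p2 + l * q1). have k2 := sqr_ge0 (q2 - l * p1).
  have /eqP : (p2 + l * q1) ^+ 2 = 0 by lra.
  rewrite sqrf_eq0 => /eqP; lra.
have hq2 : q2 = l * p1.
  have k1 := sqr_ge0 (p2 + l * q1). have k2 := sqr_ge0 (q2 - l * p1).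
  have /eqP : (q2 - l * p1) ^+ 2 = 0 by lra.
  rewrite sqrf_eq0 => /eqP; lra.
set al := m1 * m2 / (m1 + m2).
have alpos : 0 < al by rewrite /al divr_gt0 // mulr_gt0.
have key : P ^+ 2 + Q ^+ 2 = (p1 ^+ 2 + q1 ^+ 2) * (al ^+ 2 * (g1 ^+ 2 + h1 ^+ 2) + s ^+ 2 * (g2 ^+ 2 + h2 ^+ 2) + 2 * al * s * (g1 * h2 - h1 * g2)).
  rewrite /P /Q hp2 hq2 /l /al em3; fs.
split.
  by rewrite key hs2 hE1 /Ia /D /al em3; fs.
rewrite -subr_ge0.
have -> : Ia - (P ^+ 2 + Q ^+ 2) = 1 / (2 * al) * ((al * g1 - s * h2) ^+ 2 + (al * h1 + s * g2) ^+ 2).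
  have -> : (al * g1 - s * h2) ^+ 2 + (al * h1 + s * g2) ^+ 2 = al ^+ 2 * (g1 ^+ 2 + h1 ^+ 2) + s ^+ 2 * (g2 ^+ 2 + h2 ^+ 2) - 2 * al * s * (g1 * h2 - h1 * g2) by ring.
  by rewrite key hs2 hE1 /Ia /al em3; fs.
apply: mulr_ge0.
  apply: divr_ge0; [exact: ler01 | apply: mulr_ge0 => //; exact: ltW].
by apply: addr_ge0; exact: sqr_ge0.
Qed.

Lemma sum3 (R : realType) (F : 'I_3 -> R) : \sum_i F i = F (i0) + F (i1) + F (i2).
Proof.
rewrite !big_ord_recl big_ord0 addr0 addrA.
by congr (F _ + F _ + F _); apply: val_inj.
Qed.

Lemma acos_anti (R : realType) (x y : R) : -1 <= x -> x <= y -> y <= 1 -> acos y <= acos x.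
Proof.
move=> h1 hxy h2.
have hx : -1 <= x <= 1 by apply/andP; split => //; apply: le_trans h2.
have hy : -1 <= y <= 1 by apply/andP; split => //; apply: le_trans hxy.
have ax : acos x \in `[0, pi] by rewrite in_itv /= acos_ge0 // acos_lepi.
have ay : acos y \in `[0, pi] by rewrite in_itv /= acos_ge0 // acos_lepi.
rewrite leNgt; apply/negP => hlt.
have := hlt; rewrite -(ltr_cos ax ay) !acosK ?in_itv //= => hyx.
by move: hxy; rewrite leNgt hyx.
Qed.

Lemma polar (R : realType) (P Q : R) : 0 < P ^+ 2 + Q ^+ 2 ->
  exists t, cos t = P / Num.sqrt (P ^+ 2 + Q ^+ 2) /\ sin t = Q / Num.sqrt (P ^+ 2 + Q ^+ 2).
Proof.
move=> hp; set r := Num.sqrt _.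
have rp : 0 < r by rewrite /r sqrtr_gt0.
have r2 : r ^+ 2 = P ^+ 2 + Q ^+ 2 by rewrite /r sqr_sqrtr // ltW.
have hc : -1 <= P / r <= 1.
  rewrite -ler_norml normrM (gtr0_norm (x:=r^-1)) ?invr_gt0 // ler_pdivrMr // mul1r.
  rewrite -sqrtr_sqr /r ler_sqrt; last by apply: ltW.
  by rewrite lerDl sqr_ge0.
have hs : Num.sqrt (1 - (P / r) ^+ 2) = `|Q| / r.
  have -> : 1 - (P / r) ^+ 2 = (Q / r) ^+ 2.
    rewrite expr_div_n expr_div_n r2; field.
    by rewrite gt_eqF.
  by rewrite sqrtr_sqr normrM (gtr0_norm (x:=r^-1)) ?invr_gt0.
case: (leP 0 Q) => hQ.
  exists (acos (P / r)); split; first by rewrite acosK // in_itv.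
  by rewrite sin_acos // hs ger0_norm.
exists (- acos (P / r)); split; first by rewrite cosN acosK // in_itv.
by rewrite sinN sin_acos // hs ltr0_norm // mulNr opprK.
Qed.


Lemma param (R : realType) (m1 m2 m3 x1 x2 x3 : R) : 0 < m1 -> 0 < m2 ->
  m1 * x1 + m2 * x2 + m3 * x3 = 0 ->
 [/\ x1 = - (m2 * (x2 - x1) + m3 * (m1 + m2) * (x3 / (m1 + m2))) / (m1 + m2),
     x2 = (m1 * (x2 - x1) - m3 * (m1 + m2) * (x3 / (m1 + m2))) / (m1 + m2) &
     x3 = (m1 + m2) * (x3 / (m1 + m2))].
Proof.
move=> h1 h2 hc.
have M0 : m1 + m2 != 0 by rewrite gt_eqF // addr_gt0.
split.
- apply/eqP; rewrite -subr_eq0; apply/eqP.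
  have -> : x1 - - (m2 * (x2 - x1) + m3 * (m1 + m2) * (x3 / (m1 + m2))) / (m1 + m2)
    = (m1 * x1 + m2 * x2 + m3 * x3) / (m1 + m2) by field.
  by rewrite hc mul0r.
- apply/eqP; rewrite -subr_eq0; apply/eqP.
  have -> : x2 - (m1 * (x2 - x1) - m3 * (m1 + m2) * (x3 / (m1 + m2))) / (m1 + m2)
    = (m1 * x1 + m2 * x2 + m3 * x3) / (m1 + m2) by field.
  by rewrite hc mul0r.
- by field.
Qed.

Arguments param {R m1 m2 m3 x1 x2 x3}.
Arguments core {R m1 m2 m3 x1 y1 x2 y2 x3 y3 X1 Y1 X2 Y2 X3 Y3 p1 q1 p2 q2 g1 h1 g2 h2}.
Arguments polar {R P Q}.
Arguments acos_anti {R x y}.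

Theorem mainTheorem15 (R : realType) (m : 'I_3 -> R) (a n : config R) :
  masses m ->
  mtriangle m a -> (exists i, a i != (0, 0)) -> 0 < area a ->
  north_pole_rep m n ->
  cos (2 * shape_dist m n (normalize m a)) =
    4 * Num.sqrt (m i0 * m i1 * m i2) * area a / inertia m a.
Proof.
move=> [mpos msum] [ac1 ac2] _ harea [[nc1 nc2] [nd narea]].
rewrite sum3 in msum. rewrite sum3 in ac1. rewrite sum3 in ac2.
rewrite sum3 in nc1. rewrite sum3 in nc2.
have [hx1 hx2 hx3] := param (mpos i0) (mpos i1) nc1.
have [hy1 hy2 hy3] := param (mpos i0) (mpos i1) nc2.
have [hX1 hX2 hX3] := param (mpos i0) (mpos i1) ac1.
have [hY1 hY2 hY3] := param (mpos i0) (mpos i1) ac2.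
have := core (mpos i0) (mpos i1) (mpos i2) msum hx1 hy1 hx2 hy2 hx3 hy3
   hX1 hY1 hX2 hY2 hX3 hY3 (nd i0) (nd i1) (nd i2) narea.
move=> /= [key cs].
set s := Num.sqrt (m i0 * m i1 * m i2).
pose P := (m i0 * ((n i0).1 * (a i0).1 + (n i0).2 * (a i0).2) + m i1 * ((n i1).1 * (a i1).1 + (n i1).2 * (a i1).2) + m i2 * ((n i2).1 * (a i2).1 + (n i2).2 * (a i2).2)).
pose Q := (m i0 * ((n i0).2 * (a i0).1 - (n i0).1 * (a i0).2) + m i1 * ((n i1).2 * (a i1).1 - (n i1).1 * (a i1).2) + m i2 * ((n i2).2 * (a i2).1 - (n i2).1 * (a i2).2)).
have hI : inertia m a = (m i0 * ((a i0).1 ^+ 2 + (a i0).2 ^+ 2) + m i1 * ((a i1).1 ^+ 2 + (a i1).2 ^+ 2) + m i2 * ((a i2).1 ^+ 2 + (a i2).2 ^+ 2)) by rewrite /inertia sum3.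
have key' : 2 * (P ^+ 2 + Q ^+ 2) - inertia m a = 4 * (s * area a).
  by rewrite hI mulrA; exact: key.
have cs' : P ^+ 2 + Q ^+ 2 <= inertia m a by rewrite hI; exact: cs.
have mp : 0 < m i0 * m i1 * m i2 by rewrite !mulr_gt0.
have spos : 0 < s by rewrite /s sqrtr_gt0.
have sD : 0 < s * area a by rewrite mulr_gt0.
set w := P ^+ 2 + Q ^+ 2 in key' cs'.
set u := s * area a in key' sD.
set I := inertia m a in key' cs'.
have Ipos : 0 < I by lra.
have wpos : 0 < w by lra.
have hkin : forall t, kin m n (rotc t (normalize m a)) = (Num.sqrt I)^-1 * (cos t * P + sin t * Q).
  by move=> t; rewrite /kin /rotc /rotp /normalize /scalec sum3 /= /P /Q /I; ring.
set r := Num.sqrt w.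
set k := (Num.sqrt I)^-1.
have rpos : 0 < r by rewrite /r sqrtr_gt0.
have sIpos : 0 < Num.sqrt I by rewrite sqrtr_gt0.
have kpos : 0 < k by rewrite /k invr_gt0.
have r2 : r ^+ 2 = w by rewrite /r sqr_sqrtr // ltW.
have k2 : k ^+ 2 = I^-1 by rewrite /k exprVn sqr_sqrtr // ltW.
have x0le1 : k * r <= 1.
  rewrite /k mulrC ler_pdivrMr // mul1r /r.
  by rewrite ler_sqrt // ltW.
have x0ge0 : 0 <= k * r by rewrite mulr_ge0 // ltW.
have bnd : forall t, `|cos t * P + sin t * Q| <= r.
  move=> t; rewrite -sqrtr_sqr /r ler_sqrt; last by apply: ltW.
  have e : w = (cos t * P + sin t * Q) ^+ 2 + (sin t * P - cos t * Q) ^+ 2.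
    have h := cos2Dsin2 t.
    rewrite /w; have -> : P ^+ 2 + Q ^+ 2 = (cos t ^+ 2 + sin t ^+ 2) * (P ^+ 2 + Q ^+ 2) by rewrite h mul1r.
    ring.
  by rewrite e lerDl sqr_ge0.
have kb : forall t, - (k * r) <= k * (cos t * P + sin t * Q) <= k * r.
  move=> t; have := bnd t; rewrite ler_norml => /andP[b1 b2].
  by rewrite -mulrN !ler_pM2l // b1 b2.
have hsd : shape_dist m n (normalize m a) = acos (k * r).
  rewrite /shape_dist /sphere_dist.
  apply/eqP; rewrite eq_le; apply/andP; split.
  - have [t0 [ct st]] := polar wpos.
    have mem : [set acos (kin m n (rotc t (normalize m a))) | t in [set: R]] (acos (k * r)).
      exists t0 => //; rewrite hkin ct st -/r; congr acos.
      apply/eqP; rewrite -subr_eq0; apply/eqP.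
      have -> : k * (P / r * P + Q / r * Q) - k * r = k / r * ((P ^+ 2 + Q ^+ 2) - r ^+ 2).
        by field; rewrite ?gt_eqF.
      by rewrite r2 /w subrr mulr0.
    apply: (ge_inf _ mem).
    exists (-1) => z [t _ <-]; rewrite hkin.
    have /andP[b1 b2] := kb t.
    apply: (le_trans (lerN10 _)); apply: acos_ge0.
    by rewrite (le_trans _ b1) ?lerN2 ?(le_trans b2).
  - apply: lb_le_inf.
      by exists (acos (kin m n (rotc 0 (normalize m a)))), 0.
    move=> z [t _ <-]; rewrite hkin.
    have /andP[b1 b2] := kb t.
    apply: acos_anti => //.
    by rewrite (le_trans _ b1) ?lerN2.
have c2 : cos (acos (k * r)) = k * r by rewrite acosK // in_itv /= x0le1 andbT (le_trans _ x0ge0) // lerN10.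
rewrite hsd mulr_natl cos_mulr2n c2 exprMn k2 r2.
rewrite -/I -mulr_natr -(mulrA 4 s) -/u -key'.
by field; rewrite gt_eqF.
Qed.
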